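(* Let $r\ge 1$ be an integer. Define $(B^{(r)}(n,k))_{n\ge0,\,k\in\mathbb{Z}}$ by $B^{(r)}(0,0)=1$, $B^{(r)}(0,k)=0$ for $k\neq0$, $B^{(r)}(n,k)=0$ for $k<0$, and for $n\ge1$ and all $k$, \[ B^{(r)}(n,k)=\bigl(rn-k+1-r\bigr)B^{(r)}(n-1,k-1)+(k+1)B^{(r)}(n-1,k). \] Then for every $n\ge 1$ and every integer $k$, $B^{(r)}(n,k)$ equals the number of increasing plane full $(r+1)$-ary trees with $n$ internal nodes in which exactly $k+1$ leaves are cadets.
   Context: An increasing plane full $(r+1)$-ary tree with $n$ internal nodes is a rooted tree in which each internal node has exactly $r+1$ children, linearly ordered (first child, ..., $(r+1)$-st child), each node being either internal or a leaf; the $n$ internal nodes carry the distinct labels $1,\dots,n$, and labels increase along every path from the root (so the root is labelled $1$). Equivalently, such trees are built by starting from a single leaf and, at step $i=1,\dots,n$, replacing one chosen leaf by an internal node labelled $i$ having $r+1$ new ordered leaf children. A leaf is a cadet if it is the last ($(r+1)$-st) child of its parent. (The numbers $B^{(r)}(n,k)$ are the numbers of Stirling $r$-permutations of $[n]$ with $k$ descents studied by X. He.) *)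

(* Defs.v *)
From mathcomp Require Import all_boot all_order all_algebra.
From Stdlib Require List.
Set Implicit Arguments. Unset Strict Implicit. Unset Printing Implicit Defensive.
Import Order.TTheory GRing.Theory Num.Theory.

Inductive ptree := Leaf | Node of nat & seq ptree.

Fixpoint labels (t : ptree) : seq nat :=
  match t with Leaf => [::] | Node a cs => a :: flatten (map labels cs) end.

Fixpoint full (r : nat) (t : ptree) : bool :=
  match t with
  | Leaf => true
  | Node _ cs => (size cs == r.+1) && all (full r) cs
  end.

Definition lab_gt (a : nat) (c : ptree) : bool :=
  match c with Leaf => true | Node b _ => a < b end.

Fixpoint increasing (t : ptree) : bool :=
  match t with
  | Leaf => true
  | Node a cs => all (lab_gt a) cs && all increasing cs
  end.

Definition incr_tree (r n : nat) (t : ptree) : bool :=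
  [&& full r t, increasing t & perm_eq (labels t) (iota 1 n)].

Definition is_leaf (t : ptree) : bool := if t is Leaf then true else false.

Fixpoint cadets (t : ptree) : nat :=
  match t with
  | Leaf => 0
  | Node _ cs => is_leaf (last (Node 0 [::]) cs) + sumn (map cadets cs)
  end.

Definition card_is (P : ptree -> Prop) (m : nat) : Prop :=
  exists s : seq ptree,
    List.NoDup s /\ (forall t, List.In t s <-> P t) /\ size s = m.

Local Open Scope ring_scope.

Fixpoint B (r n : nat) (k : int) : int :=
  match n with
  | 0%N => (k == 0)%:R
  | n'.+1 =>
      if k < 0 then 0
      else ((r * n'.+1)%:R - k + 1 - r%:R) * B r n' (k - 1) + (k + 1) * B r n' k
  end.

Local Close Scope ring_scope.

(* Main.v *)
Require Import Defs.
From HB Require Import structures.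
From mathcomp Require Import all_boot all_order all_algebra zify ring.
From Stdlib Require List.
Set Implicit Arguments. Unset Strict Implicit. Unset Printing Implicit Defensive.
Import Order.TTheory GRing.Theory Num.Theory.

Fixpoint enc (t : ptree) : GenTree.tree unit :=
  match t with Leaf => GenTree.Leaf tt | Node a cs => GenTree.Node a (map enc cs) end.
Fixpoint dec (g : GenTree.tree unit) : ptree :=
  match g with GenTree.Leaf _ => Leaf | GenTree.Node a gs => Node a (map dec gs) end.

Lemma ptree_indF (P : ptree -> Prop) : P Leaf ->
  (forall a cs, List.Forall P cs -> P (Node a cs)) -> forall t, P t.
Proof.
move=> HL HN; fix F 1 => -[|a cs]; first exact: HL.
apply: HN; elim: cs => [|c cs IH]; first by constructor.
by constructor; [apply: F | apply: IH].
Qed.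

Lemma encK : cancel enc dec.
Proof.
elim/ptree_indF => //= a cs IH; congr Node.
by elim: cs IH => //= c cs IHc /List.Forall_cons_iff [-> /IHc ->].
Qed.

HB.instance Definition _ := Equality.copy ptree (can_type encK).

Lemma ptree_ind' (P : ptree -> Prop) : P Leaf ->
  (forall a cs, (forall c, c \in cs -> P c) -> P (Node a cs)) -> forall t, P t.
Proof.
move=> HL HN; elim/ptree_indF => // a cs H; apply: HN.
elim: cs H => //= c cs IHc /List.Forall_cons_iff [Hc Hcs] d.
by rewrite inE => /orP [/eqP -> // | ]; apply: IHc.
Qed.

Lemma memS (T : eqType) (c d : T) cs : d \in cs -> d \in c :: cs.
Proof. by rewrite inE => ->; rewrite orbT. Qed.

Fixpoint growc (x : ptree) (b : bool) (t : ptree) : seq (ptree * bool) :=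
  match t with
  | Leaf => [:: (x, b)]
  | Node a cs =>
    let fix growl cs := match cs with
      | [::] => [::]
      | c :: cs' => [seq (p.1 :: cs', p.2) | p <- growc x (nilp cs') c]
                    ++ [seq (c :: p.1, p.2) | p <- growl cs'] end
    in [seq (Node a p.1, p.2) | p <- growl cs]
  end.

Fixpoint growl (x : ptree) (cs : seq ptree) : seq (seq ptree * bool) :=
  match cs with
  | [::] => [::]
  | c :: cs' => [seq (p.1 :: cs', p.2) | p <- growc x (nilp cs') c]
                ++ [seq (c :: p.1, p.2) | p <- growl x cs'] end.

Lemma growcE x b a cs : growc x b (Node a cs) = [seq (Node a p.1, p.2) | p <- growl x cs].
Proof. rewrite /=; congr map; by elim: cs => //= c cs ->. Qed.

Definition cad (b : bool) (t : ptree) := (b && is_leaf t) + cadets t.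

Fixpoint cadl (cs : seq ptree) : nat :=
  match cs with [::] => 0 | c :: cs' => cad (nilp cs') c + cadl cs' end.

Lemma cadetsE a cs : cadets (Node a cs) = cadl cs.
Proof.
rewrite /=; elim: cs => //= c cs <-.
case: cs => [|d cs] /=; rewrite /cad /=.
  by case: c => //= *; rewrite !addn0.
lia.
Qed.

Fixpoint nleaves (t : ptree) : nat :=
  match t with Leaf => 1 | Node _ cs => sumn (map nleaves cs) end.

Lemma growl_mem x c cs p : p \in growl x (c :: cs) ->
  (exists2 q, q \in growc x (nilp cs) c & p = (q.1 :: cs, q.2)) \/
  (exists2 q, q \in growl x cs & p = (c :: q.1, q.2)).
Proof.
rewrite /= mem_cat => /orP [/mapP [q Hq ->] | /mapP [q Hq ->]].
  by left; exists q.
by right; exists q.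
Qed.

Lemma growl_sz x cs p : p \in growl x cs -> size p.1 = size cs.
Proof.
elim: cs p => // c cs IH p /growl_mem [[q _ ->]|[q Hq ->]] //=.
by rewrite IH.
Qed.

Lemma growc_size x b t : size (growc x b t) = nleaves t.
Proof.
move: b; elim/ptree_ind': t => //= a cs IH b; rewrite size_map.
elim: cs IH => //= c cs IHc IH.
rewrite size_cat !size_map IH ?mem_head // IHc // => d Hd.
by apply: IH; rewrite inE Hd orbT.
Qed.

Lemma growc_cnt x b t : count snd (growc x b t) = cad b t.
Proof.
move: b; elim/ptree_ind': t => [b|a cs IH b]; first by rewrite /= /cad /= andbT addn0.
rewrite growcE count_map /cad andbF add0n cadetsE.
elim: cs IH => //= c cs IHc IH.
rewrite count_cat !count_map.
rewrite (eq_count (a2 := snd)) // IH ?mem_head //.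
rewrite (eq_count (a2 := snd)) // in IHc *.
rewrite IHc // => d Hd.
by apply: IH; rewrite inE Hd orbT.
Qed.

Lemma growc_cad x b t : is_leaf x = false ->
  forall p, p \in growc x b t -> cad b p.1 + p.2 = cad b t + cadets x.
Proof.
move=> Hx; move: b; elim/ptree_ind': t => [b|a cs IH b] p.
  rewrite /= inE => /eqP -> /=; rewrite /cad /= Hx andbF andbT; lia.
rewrite growcE => /mapP [q Hq ->].
change (cad b (Node a q.1) + q.2 = cad b (Node a cs) + cadets x).
rewrite /cad !andbF !add0n !cadetsE.
elim: cs IH q Hq => //= c cs IHc IH q /growl_mem [[q' Hq' ->]|[q' Hq' ->]] /=.
  by have := IH c (mem_head _ _) (nilp cs) q' Hq'; lia.
rewrite /nilp (growl_sz Hq').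
have := IHc (fun d Hd => IH d (memS _ Hd)) q' Hq'; lia.
Qed.

Lemma growl_all (P Q : pred ptree) x cs : (forall c, P c -> Q c) ->
  (forall c, c \in cs -> P c -> forall b p, p \in growc x b c -> Q p.1) ->
  all P cs -> forall q, q \in growl x cs -> all Q q.1.
Proof.
move=> PQ; elim: cs => // c cs IHc H /= /andP [Pc Pcs] q /growl_mem [[q' Hq' ->]|[q' Hq' ->]] /=.
  rewrite (H c (mem_head _ _) Pc _ _ Hq') /=.
  by apply/allP => d Hd; apply: PQ; apply: (allP Pcs).
rewrite PQ //=; apply: IHc Hq' => // d Hd; apply: H; exact: memS.
Qed.

Lemma growc_full r x b t : full r t -> full r x ->
  forall p, p \in growc x b t -> full r p.1.
Proof.
move=> + Hx; move: b; elim/ptree_ind': t => [b|a cs IH b] Ht p.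
  by rewrite /= inE => /eqP ->.
rewrite growcE => /mapP [q Hq ->] /=.
move: Ht => /= /andP [Hs Ha]; rewrite (growl_sz Hq) Hs /=.
apply: (growl_all (P := full r)) Hq => // c Hc Pc b' p' Hp.
exact: IH Pc _ Hp.
Qed.

Lemma growc_lab a x b c p : p \in growc x b c ->
  lab_gt a p.1 = (if c is Leaf then lab_gt a x else lab_gt a c).
Proof.
case: c => [|a' cs]; first by rewrite /= inE => /eqP ->.
by rewrite growcE => /mapP [q _ ->].
Qed.

Lemma growc_incr x b t : increasing t -> increasing x ->
  all (fun a => lab_gt a x) (labels t) ->
  forall p, p \in growc x b t -> increasing p.1.
Proof.
move=> + Hx; move: b; elim/ptree_ind': t => [b|a cs IH b] Ht Hl p.
  by rewrite /= inE => /eqP ->.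
rewrite growcE => /mapP [q Hq ->] /=.
move: Ht Hl => /= /andP [H1 H2] /andP [Hax Hl].
apply/andP; split.
  apply: (growl_all (P := lab_gt a)) Hq => // c Hc Pc b' p' Hp.
  by rewrite (growc_lab _ Hp); case: (c) Pc.
apply: (growl_all (P := fun c => increasing c && all (fun a => lab_gt a x) (labels c)) (Q := increasing)) Hq.
- by move=> c /andP [].
- move=> c Hc /andP [P1 P2] b' p' Hp; exact: IH P1 P2 _ Hp.
apply/allP => c Hc; rewrite (allP H2) //=.
apply/allP => l Hlc; apply: (allP Hl); apply/flatten_mapP; by exists c.
Qed.

Lemma growc_labels x b t p : p \in growc x b t ->
  perm_eq (labels p.1) (labels x ++ labels t).
Proof.
move: b p; elim/ptree_ind': t => [b|a cs IH b] p.
  by rewrite /= inE => /eqP -> /=; rewrite cats0.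
rewrite growcE => /mapP [q Hq ->] /=.
rewrite perm_sym -cat1s perm_catCA /= perm_cons perm_sym.
elim: cs IH q Hq => // c cs IHc IH q /growl_mem [[q' Hq' ->]|[q' Hq' ->]] /=.
  by rewrite catA perm_cat2r; apply: IH Hq'; exact: mem_head.
rewrite perm_sym perm_catCA perm_cat2l perm_sym; apply: IHc Hq' => d Hd; apply: IH; exact: memS.
Qed.

Fixpoint prune (n : nat) (t : ptree) : ptree :=
  match t with Leaf => Leaf | Node a cs => if a == n then Leaf else Node a (map (prune n) cs) end.

Lemma prune_id n t : n \notin labels t -> prune n t = t.
Proof.
elim/ptree_ind': t => // a cs IH /=; rewrite inE negb_or eq_sym => /andP [/negbTE -> Hn].
congr Node; apply: map_id_in => c Hc; apply: IH => //.
apply: contra Hn => Hnc; apply/flatten_mapP; by exists c.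
Qed.

Lemma growc_prune n cs0 b t p : n \notin labels t ->
  p \in growc (Node n cs0) b t -> prune n p.1 = t.
Proof.
move: b p; elim/ptree_ind': t => [b|a cs IH b] p.
  by rewrite /= inE => _ /eqP -> /=; rewrite eqxx.
rewrite growcE -[labels (Node a cs)]/(a :: flatten (map labels cs)) inE negb_or eq_sym.
move=> /andP [Ha Hn] /mapP [q Hq ->] /=; rewrite (negbTE Ha); congr Node.
elim: cs IH Hn q Hq => // c cs IHc IH; rewrite /= mem_cat negb_or => /andP [Hc Hcs].
move=> q /growl_mem [[q' Hq' ->]|[q' Hq' ->]] /=.
  rewrite (IH c (mem_head _ _) _ _ Hc Hq'); congr cons.
  apply: map_id_in => d Hd; apply: prune_id.
  apply: contra Hcs => Hnd; apply/flatten_mapP; by exists d.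
rewrite prune_id //; congr cons; apply: IHc Hq' => // d Hd; apply: IH; exact: memS.
Qed.

Lemma growc_sizel x b t p : p \in growc x b t ->
  size (labels p.1) = size (labels x) + size (labels t).
Proof. by move/growc_labels/perm_size; rewrite size_cat. Qed.

Lemma fst_growc x b a cs :
  map fst (growc x b (Node a cs)) = map (Node a) (map fst (growl x cs)).
Proof. by rewrite growcE -!map_comp. Qed.

Lemma fst_growl x c cs : map fst (growl x (c :: cs)) =
  map (fun c' => c' :: cs) (map fst (growc x (nilp cs) c)) ++ map (cons c) (map fst (growl x cs)).
Proof. by rewrite /= map_cat -!map_comp. Qed.

Lemma growc_uniq x b t : is_leaf x = false -> uniq (map fst (growc x b t)).
Proof.
move=> Hx; have Hx0 : 0 < size (labels x) by case: (x) Hx.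
move: b; elim/ptree_ind': t => [b|a cs IH b] //.
rewrite fst_growc map_inj_uniq; last by move=> u v [].
elim: cs IH => // c cs IHc IH.
rewrite fst_growl cat_uniq.
rewrite map_inj_uniq; last by move=> u v [].
have Ic : injective (cons c) by move=> u v [].
rewrite (map_inj_uniq Ic).
rewrite IHc; last by move=> d Hd; apply: IH; exact: memS.
rewrite IH ?mem_head //= andbT.
apply/hasPn => y /mapP [q Hq ->]; apply/negP => /mapP [c' /mapP [p Hp ->]] [E _].
have := growc_sizel Hp; rewrite -E; lia.
Qed.

Lemma leaf_kids r n cs : full r (Node n cs) -> increasing (Node n cs) ->
  all (fun l => l <= n) (labels (Node n cs)) -> cs = nseq r.+1 Leaf.
Proof.
move=> /= /andP [/eqP Hs _] /andP [Hl _] /andP [_ Hall].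
rewrite -[Leaf :: _]/(nseq r.+1 Leaf) -Hs; apply/all_pred1P; apply/allP => c Hc.
case: c Hc => // b ds Hc.
have := allP Hl _ Hc; rewrite /= => Hnb.
have : b <= n.
  apply: (allP Hall); apply/flatten_mapP; exists (Node b ds) => //=.
  exact: mem_head.
lia.
Qed.

Lemma growc_complete r n b t : increasing t -> all (fun l => l <= n) (labels t) ->
  uniq (labels t) -> n \in labels t -> full r t ->
  t \in map fst (growc (Node n (nseq r.+1 Leaf)) b (prune n t)).
Proof.
move: b; elim/ptree_ind': t => // a cs IH b Hi Hle Hu Hn Hf.
have [Ea|Ea] := eqVneq a n.
  subst a; rewrite /= eqxx inE (leaf_kids Hf Hi Hle) //.
rewrite /= (negbTE Ea) -/(growc _ _ (Node a (map (prune n) cs))) fst_growc.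
rewrite mem_map; last by move=> u v [].
move: Hi Hle Hu Hn Hf => /= /andP [_ Hi] /andP [_ Hle] /andP [_ Hu].
rewrite inE eq_sym (negbTE Ea) /= => Hn /andP [_ Hf].
elim: cs IH Hi Hle Hu Hn Hf => // c cs IHc IH /= /andP [Hic Hics].
rewrite all_cat => /andP [Hlc Hlcs]; rewrite cat_uniq => /andP [Huc /andP [Hdis Hucs]].
rewrite mem_cat => Hn /andP [Hfc Hfcs].
rewrite fst_growl mem_cat.
have [Hnc|Hnc] := boolP (n \in labels c).
  have Hncs : n \notin flatten [seq labels i | i <- cs].
    apply: contra Hdis => H; apply/hasP; by exists n.
  rewrite map_id_in; last first.
    move=> d Hd; apply: prune_id; apply: contra Hncs => H.
    apply/flatten_mapP; by exists d.
  rewrite mem_map; last by move=> u v [].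
  by rewrite (IH c (mem_head _ _)).
rewrite (prune_id Hnc) mem_map; last by move=> u v [].
rewrite IHc ?orbT //.
  by move=> d Hd; apply: IH; exact: memS.
by move: Hn; rewrite (negbTE Hnc).
Qed.

Lemma prune_full r n t : full r t -> full r (prune n t).
Proof.
elim/ptree_ind': t => // a cs IH /= /andP [Hs Ha].
case: (a == n) => //=; rewrite size_map Hs /=.
apply/allP => c' /mapP [c Hc ->]; apply: IH => //; exact: (allP Ha).
Qed.

Lemma lab_prune n a c : lab_gt a c -> lab_gt a (prune n c).
Proof. by case: c => //= b ds; case: (b == n). Qed.

Lemma prune_incr n t : increasing t -> increasing (prune n t).
Proof.
elim/ptree_ind': t => // a cs IH /= /andP [H1 H2].
case: (a == n) => //=; apply/andP; split; apply/allP => c' /mapP [c Hc ->].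
  by apply: lab_prune; exact: (allP H1).
by apply: IH => //; exact: (allP H2).
Qed.

Lemma labels_nseq m k : labels (Node m (nseq k Leaf)) = [:: m].
Proof. by elim: k. Qed.

Lemma prune_labels r n t : full r t -> increasing t -> all (fun l => l <= n) (labels t) ->
  labels (prune n t) = filter (predC1 n) (labels t).
Proof.
elim/ptree_ind': t => // a cs IH Hf Hi Hl.
have [Ea|Ea] := eqVneq a n.
  subst a; rewrite (leaf_kids Hf Hi Hl) labels_nseq /= eqxx.
  by [].
rewrite /= (negbTE Ea) /= filter_flatten -!map_comp; congr cons; congr flatten.
move: Hf Hi Hl => /= /andP [_ Hf] /andP [_ Hi] /andP [_ Hl].
apply/eq_in_map => c Hc /=; apply: IH => //; [exact: (allP Hf) | exact: (allP Hi)|].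
apply/allP => l Hlc; apply: (allP Hl); apply/flatten_mapP; by exists c.
Qed.

Definition xn r n := Node n (nseq r.+1 Leaf).

Fixpoint trees r n : seq ptree :=
  match n with
  | 0 => [:: Leaf]
  | n'.+1 => flatten [seq map fst (growc (xn r n'.+1) false t) | t <- trees r n']
  end.

Lemma iotaS1 n : iota 1 n.+1 = iota 1 n ++ [:: n.+1].
Proof. by rewrite -[n.+1]addn1 iotaD add1n addn1. Qed.

Lemma trees_sound r n t : t \in trees r n -> incr_tree r n t.
Proof.
elim: n t => [|n IH] t; first by rewrite inE => /eqP ->.
move=> /flatten_mapP [t0 /IH /and3P [Hf Hi Hp] /mapP [p Hp' ->]].
have Hx : labels (xn r n.+1) = [:: n.+1] by rewrite labels_nseq.
apply/and3P; split.
- apply: growc_full Hp' => //=; rewrite size_nseq eqxx /=.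
  by rewrite all_nseq orbT.
- apply: growc_incr Hp' => //=.
    by rewrite /= !all_nseq !orbT.
  apply/allP => a Ha /=; move: (perm_mem Hp a); rewrite Ha mem_iota; lia.
- apply: perm_trans (growc_labels Hp') _; rewrite Hx iotaS1 /= perm_sym.
  by rewrite perm_catC /= perm_cons perm_sym.
Qed.

Lemma trees_complete r n t : incr_tree r n t -> t \in trees r n.
Proof.
elim: n t => [|n IH] t.
  case/and3P => _ _ /perm_size; rewrite size_iota.
  by case: t => //= a cs.
case/and3P => Hf Hi Hp.
have Hle : all (fun l => l <= n.+1) (labels t).
  by apply/allP => l Hl; move: (perm_mem Hp l); rewrite Hl mem_iota; lia.
have Hu : uniq (labels t) by rewrite (perm_uniq Hp) iota_uniq.
have Hn : n.+1 \in labels t by rewrite (perm_mem Hp) mem_iota; lia.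
apply/flatten_mapP; exists (prune n.+1 t); last exact: growc_complete.
apply: IH; apply/and3P; split; [exact: prune_full | exact: prune_incr |].
rewrite (prune_labels Hf Hi Hle).
have -> : iota 1 n = filter (predC1 n.+1) (iota 1 n.+1).
  rewrite iotaS1 filter_cat /= eqxx cats0; apply/esym/all_filterP.
  by apply/allP => l; rewrite mem_iota /=; lia.
exact: perm_filter.
Qed.

Lemma uniq_flatten_map (T U : eqType) (f : T -> seq U) s : uniq s ->
  (forall t, t \in s -> uniq (f t)) ->
  (forall t1 t2 u, t1 \in s -> t2 \in s -> u \in f t1 -> u \in f t2 -> t1 = t2) ->
  uniq (flatten (map f s)).
Proof.
elim: s => //= t s IH /andP [Hts Hs] Hu Hd.
rewrite cat_uniq Hu ?mem_head //= IH //; last first.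
- by move=> t1 t2 u H1 H2; apply: Hd; apply: memS.
- by move=> t' H; apply: Hu; apply: memS.
rewrite andbT; apply/hasPn => u /flatten_mapP [t' Ht' Hu']; apply/negP => Hut.
have E := Hd t t' u (mem_head _ _) (memS _ Ht') Hut Hu'.
by move: Hts; rewrite E Ht'.
Qed.

Lemma trees_uniq r n : uniq (trees r n).
Proof.
elim: n => //= n IH; apply: uniq_flatten_map => //.
  by move=> t _; apply: growc_uniq.
move=> t1 t2 u H1 H2 /mapP [p1 Hp1 ->] /mapP [p2 Hp2 E].
have Hn : forall t, t \in trees r n -> n.+1 \notin labels t.
  move=> t /trees_sound /and3P [_ _ Hp]; rewrite (perm_mem Hp) mem_iota; lia.
rewrite -(growc_prune (Hn _ H1) Hp1) -(growc_prune (Hn _ H2) Hp2).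
by rewrite E.
Qed.

Lemma count_if (A B : bool) (s : seq (ptree * bool)) :
  count (fun p => if p.2 then A else B) s = A * count snd s + B * count (predC snd) s.
Proof. elim: s => [|[u d] s IH] /=; first by rewrite !muln0. rewrite IH; case: d; case: (A); case: (B) => /=; lia. Qed.

Lemma cadets_x r n : cadets (xn r n) = 1.
Proof. rewrite /xn /=; elim: r => //= r ->. Qed.

Lemma nleaves_full r t : full r t -> nleaves t = 1 + r * size (labels t).
Proof.
elim/ptree_ind': t => [|a cs IH /= /andP [/eqP Hs Ha]]; first by rewrite /= muln0.
have : sumn (map nleaves cs) = size cs + r * size (flatten (map labels cs)).
  elim: cs IH Ha {Hs} => [|c cs IHc IH /andP [Hc Hcs]] /=; first by rewrite muln0.
  rewrite IH ?mem_head // IHc //; last by move=> d Hd; apply: IH; exact: memS.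
  rewrite size_cat mulnDr; move: (size (labels c)) (size cs) (size (flatten _)) => x y z; lia.
rewrite Hs => ->; rewrite /= mulnS; lia.
Qed.

Lemma count_grow r n t (j : int) : full r t ->
  count (fun u => Posz (cadets u) == j) (map fst (growc (xn r n) false t)) =
  (Posz (cadets t) == j) * cadets t + (Posz (cadets t).+1 == j) * (nleaves t - cadets t).
Proof.
move=> Hf; rewrite count_map.
rewrite (@eq_in_count _ _ (fun p => if p.2 then Posz (cadets t) == j else Posz (cadets t).+1 == j)).
  rewrite count_if.
  have Hc : count snd (growc (xn r n) false t) = cadets t by rewrite growc_cnt.
  have := count_predC snd (growc (xn r n) false t).
  rewrite growc_size Hc => <-; rewrite addKn //.
move=> p Hp /=; have := growc_cad (x := xn r n) (erefl false) Hp; rewrite cadets_x /cad /=.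
case: (p.2) => /= E; congr (_ == _); lia.
Qed.

Definition C r n (j : int) := count (fun t => Posz (cadets t) == j) (trees r n).

Lemma cad_le t : cadets t <= nleaves t.
Proof.
have := count_size snd (growc Leaf false t).
by rewrite growc_cnt growc_size /cad andFb add0n.
Qed.

Local Open Scope ring_scope.

Lemma sum_int (j : int) (L : nat) s : all (fun a => a <= L)%N s ->
  Posz (sumn (map (fun a => (Posz a == j) * a + (Posz a.+1 == j) * (L - a))%N s)) =
  j * (count (fun a => Posz a == j) s)%:Z + (L%:Z - (j - 1)) * (count (fun a => Posz a == j - 1) s)%:Z.
Proof.
elim: s => [|a s IH] /=; first by rewrite !mulr0 addr0.
move=> /andP [HaL Hs].
have Ee : Posz ((Posz a == j) * a + (Posz a.+1 == j) * (L - a))%N =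
   j * (Posz a == j)%:Z + (L%:Z - (j-1)) * (Posz a == j-1)%:Z.
  have E1 : (Posz a.+1 == j) = (Posz a == j - 1) by apply/eqP/eqP => H; lia.
  rewrite E1.
  have [Ha|Ha] := eqVneq (Posz a) j.
    have -> : (Posz a == j - 1) = false by apply/eqP; lia.
    rewrite /=; lia.
  have [Hb|Hb] := eqVneq (Posz a) (j - 1).
    rewrite /=; lia.
  rewrite /=; lia.
rewrite PoszD Ee IH // !PoszD; ring.
Qed.

Lemma trees_full r n t : t \in trees r n -> full r t /\ nleaves t = (1 + r * n)%N.
Proof.
move=> /trees_sound /and3P [Hf _ Hp]; split => //.
by rewrite (nleaves_full Hf) (perm_size Hp) size_iota.
Qed.

Lemma C_rec r n j : (C r n.+1 j)%:Z =
  j * (C r n j)%:Z + ((1 + r * n)%N%:Z - (j - 1)) * (C r n (j - 1))%:Z.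
Proof.
rewrite /C /= count_flatten -map_comp.
set L := (1 + r * n)%N.
have E : [seq (count (fun t => Posz (cadets t) == j) \o
            (fun t => [seq i.1 | i <- growc (xn r n.+1) false t])) t | t <- trees r n] =
  [seq ((Posz a == j) * a + (Posz a.+1 == j) * (L - a))%N | a <- map cadets (trees r n)].
  rewrite -map_comp; apply/eq_in_map => t Ht /=.
  have [Hf Hl] := trees_full Ht.
  by rewrite count_grow // Hl.
rewrite E sum_int ?count_map //.
apply/allP => a /mapP [t Ht ->]; have := cad_le t; have [_ ->] := trees_full Ht; done.
Qed.

Lemma C_neg r n j : j < 0 -> C r n j = 0%N.
Proof.
move=> Hj; rewrite /C; apply/eqP; rewrite -leqn0 leqNgt -has_count; apply/hasPn => t _.
by apply/eqP => E; move: Hj; rewrite -E.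
Qed.

Lemma B_C r n k : (1 <= n)%N -> B r n k = (C r n (k + 1))%:Z.
Proof.
elim: n k => // n IH k _.
case: n IH => [|n] IH.
  rewrite /C /=.
  have H1 : (is_leaf (last Leaf (nseq r Leaf)) + (0 + sumn [seq cadets i | i <- nseq r Leaf]))%N = 1%N.
    by elim: (r) => //= r' [->].
  rewrite H1 addn0.
  case: ltP => Hk.
    have -> : (Posz 1 == k + 1) = false by apply/eqP; lia.
    by [].
  have [->|H0] := eqVneq k 0.
    by rewrite /= mulr0 add0r mulr1.
  have [->|H1'] := eqVneq k 1.
    by rewrite /= muln1; ring.
  have -> : (Posz 1 == k + 1) = false by apply/eqP; lia.
  have -> : (k - 1 == 0) = false by apply/eqP; lia.
  by rewrite /= !mulr0 addr0.
rewrite -[B r n.+2 k]/(if k < 0 then 0 else ((r * n.+2)%:R - k + 1 - r%:R) * B r n.+1 (k - 1) + (k + 1) * B r n.+1 k) !IH // subrK (C_rec r n.+1 (k + 1)) addrK.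
case: ltP => Hk.
  rewrite (C_neg _ _ Hk) mulr0 addr0.
  have [E|E] := eqVneq (k + 1) 0; first by rewrite E mul0r.
  by rewrite C_neg ?mulr0 //; lia.
rewrite !natz !PoszD !PoszM; ring.
Qed.

Lemma InP (T : eqType) (x : T) s : List.In x s <-> x \in s.
Proof.
elim: s => [|y s IH] /=; first by split.
rewrite inE; split.
  by case=> [->|/IH ->]; rewrite ?eqxx ?orbT.
by case/orP => [/eqP ->|/IH H]; [left|right].
Qed.

Lemma uniq_NoDup (T : eqType) (s : seq T) : uniq s -> List.NoDup s.
Proof.
elim: s => [|y s IH] /=; first by constructor.
by move=> /andP [Hn Hu]; constructor; [rewrite InP; apply/negP | apply: IH].
Qed.

Theorem mainTheorem3 (r n : nat) (k : int) :
  (1 <= r)%N -> (1 <= n)%N ->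
  exists m : nat,
    B r n k = m%:Z /\
    card_is (fun t => incr_tree r n t /\ (cadets t)%:Z = k + 1) m.
Proof.
move=> _ Hn; exists (C r n (k + 1)); split; first exact: B_C.
exists (filter (fun t => Posz (cadets t) == k + 1) (trees r n)); split; last split.
- by apply: uniq_NoDup; rewrite filter_uniq // trees_uniq.
- move=> t; rewrite InP mem_filter; split.
    by move=> /andP [/eqP E H]; split => //; exact: trees_sound.
  by move=> [H /eqP E]; rewrite E trees_complete.
- by rewrite size_filter.
Qed.
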